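(* Let $N\ge 1$, let $\lambda_1,\dots,\lambda_N$ be distinct nonzero real numbers and $\Lambda=\operatorname{diag}(\lambda_1,\dots,\lambda_N)$. Let $u,f,g$ be smooth complex-valued functions and $v_1,v_2$ smooth real-valued functions of $(x,y,t)$ on a domain. Suppose that for each $\alpha=1,\dots,N$ the vector $F_\alpha=(\phi_{1\alpha},\phi_{2\alpha},\phi_{3\alpha})^T$ is a smooth solution of the Lax system $$F_{\alpha,x}=W^x(\lambda_\alpha)F_\alpha,\qquad F_{\alpha,y}=W^y(\lambda_\alpha)F_\alpha,\qquad F_{\alpha,t}=W^t(\lambda_\alpha)F_\alpha .$$ Then the Lax equations $$L_x(\lambda)=[W^x(\lambda),L(\lambda)],\qquad L_y(\lambda)=[W^y(\lambda),L(\lambda)],\qquad L_t(\lambda)=[W^t(\lambda),L(\lambda)]$$ hold for all $\lambda\in\mathbb C\setminus\{\lambda_1,\dots,\lambda_N\}$ if and only if $$\langle\Phi_2,\Phi_1\rangle=-\mathrm{i}\,u,\qquad \langle\Phi_3,\Phi_1\rangle=f,\qquad \langle\Phi_3,\Phi_2\rangle=-g .$$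
   Context: Notation: $\Phi_j=(\phi_{j1},\dots,\phi_{jN})^T\in\mathbb C^N$ for $j=1,2,3$; for $V,W\in\mathbb C^N$, $\langle V,W\rangle=V^*W=\sum_\alpha \bar V_\alpha W_\alpha$, so $\langle\Phi_i,\Lambda^m\Phi_j\rangle=\sum_{\alpha=1}^N\lambda_\alpha^m\bar\phi_{i\alpha}\phi_{j\alpha}$. The Lax matrices are $$W^x(\lambda)=\begin{pmatrix}\mathrm{i}\lambda&0&\mathrm{i}f\\0&\mathrm{i}\lambda&\mathrm{i}g\\ \mathrm{i}\bar f&\mathrm{i}\bar g&0\end{pmatrix},\qquad W^y(\lambda)=\begin{pmatrix}\mathrm{i}\lambda&u&\mathrm{i}f\\-\bar u&-\mathrm{i}\lambda&-\mathrm{i}g\\ \mathrm{i}\bar f&-\mathrm{i}\bar g&0\end{pmatrix},$$ $$W^t(\lambda)=\begin{pmatrix}-2\mathrm{i}\lambda^2+\mathrm{i}|u|^2+\mathrm{i}v_1 & -2u\lambda+\mathrm{i}u_y & -2\mathrm{i}f\lambda-2f_y\\ 2\bar u\lambda+\mathrm{i}\bar u_y & 2\mathrm{i}\lambda^2-\mathrm{i}|u|^2-\mathrm{i}v_2 & 2\mathrm{i}g\lambda-2g_y\\ -2\mathrm{i}\bar f\lambda+2\bar f_y & 2\mathrm{i}\bar g\lambda+2\bar g_y & -2\mathrm{i}(|f|^2-|g|^2)\end{pmatrix}.$$ The matrix $L(\lambda)$ is $$L(\lambda)=C+\sum_{\alpha=1}^N\frac{1}{\lambda-\lambda_\alpha}F_\alpha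 F_\alpha^*,\qquad C=\operatorname{diag}(1,-1,0),$$ i.e. $L(\lambda)_{ab}=C_{ab}+\sum_\alpha \phi_{a\alpha}\bar\phi_{b\alpha}/(\lambda-\lambda_\alpha)$. *)

(* Defs.v *)
(* Complex numbers are Coquelicot's [C] (= R*R),
   viewed as a normed module over R for partial derivatives. *)
From Stdlib Require Import Reals.
From Coquelicot Require Import Coquelicot.
Open Scope R_scope.

Fixpoint csum (n : nat) (F : nat -> C) : C :=
  match n with
  | O => RtoC 0
  | S m => Cplus (csum m F) (F m)
  end.

(* 3x3 complex matrices, indices 0,1,2 (paper's 1,2,3). *)
Definition mat3 := nat -> nat -> C.

Definition mmul (A B : mat3) : mat3 :=
  fun a b => csum 3 (fun c => Cmult (A a c) (B c b)).

Definition comm (A B : mat3) : mat3 :=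
  fun a b => Cminus (mmul A B a b) (mmul B A a b).

Definition mk3 (m00 m01 m02 m10 m11 m12 m20 m21 m22 : C) : mat3 :=
  fun a b =>
    match a, b with
    | 0, 0 => m00 | 0, 1 => m01 | 0, 2 => m02
    | 1, 0 => m10 | 1, 1 => m11 | 1, 2 => m12
    | 2, 0 => m20 | 2, 1 => m21 | 2, 2 => m22
    | _, _ => RtoC 0
    end%nat.

Notation "'ii'" := Ci.

Definition Wx (lam : C) (f g : C) : mat3 :=
  mk3 (ii * lam) 0 (ii * f)
      0 (ii * lam) (ii * g)
      (ii * Cconj f) (ii * Cconj g) 0.

Definition Wy (lam : C) (u f g : C) : mat3 :=
  mk3 (ii * lam) u (ii * f)
      (- Cconj u) (- (ii * lam)) (- (ii * g))
      (ii * Cconj f) (- (ii * Cconj g)) 0.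

Definition csq (z : C) : C := Cmult z (Cconj z).

(* W^t(lambda); uy, fy, gy are the y-derivatives of u, f, g;
   conj(u_y) = (conj u)_y etc. *)
Definition Wt (lam : C) (u uy f fy g gy : C) (v1 v2 : R) : mat3 :=
  mk3 (- (2 * ii * lam * lam) + ii * csq u + ii * RtoC v1)
      (- (2 * u * lam) + ii * uy)
      (- (2 * ii * f * lam) - 2 * fy)
      (2 * Cconj u * lam + ii * Cconj uy)
      (2 * ii * lam * lam - ii * csq u - ii * RtoC v2)
      (2 * ii * g * lam - 2 * gy)
      (- (2 * ii * Cconj f * lam) + 2 * Cconj fy)
      (2 * ii * Cconj g * lam + 2 * Cconj gy)
      (- (2 * ii * (csq f - csq g))).

Definition Cdiag : mat3 := mk3 1 0 0  0 (-1) 0  0 0 0.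

(* L(lambda) = C + sum_alpha F_alpha F_alpha^* / (lambda - lambda_alpha),
   where ph a al = phi_{a+1, al+1} at the current point. *)
Definition Lmat (N : nat) (lams : nat -> R) (ph : nat -> nat -> C) (lam : C)
  : mat3 :=
  fun a b => Cplus (Cdiag a b)
    (csum N (fun al => Cdiv (Cmult (ph a al) (Cconj (ph b al)))
                            (Cminus lam (RtoC (lams al))))).

Definition cinner (N : nat) (ph : nat -> nat -> C) (i j : nat) : C :=
  csum N (fun al => Cmult (Cconj (ph i al)) (ph j al)).

Definition has_pdx (F : R -> R -> R -> C) (x y t : R) (l : C) : Prop :=
  is_derive (fun s => F s y t) x l.
Definition has_pdy (F : R -> R -> R -> C) (x y t : R) (l : C) : Prop :=
  is_derive (fun s => F x s t) y l.
Definition has_pdt (F : R -> R -> R -> C) (x y t : R) (l : C) : Prop :=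
  is_derive (fun s => F x y s) t l.

Definition mvec (A : mat3) (v : nat -> C) (a : nat) : C :=
  csum 3 (fun c => Cmult (A a c) (v c)).

Definition open3 (D : R -> R -> R -> Prop) : Prop :=
  @open (prod_UniformSpace (prod_UniformSpace R_UniformSpace R_UniformSpace)
           R_UniformSpace)
    (fun p => D (fst (fst p)) (snd (fst p)) (snd p)).

Definition at_pt (phi : nat -> nat -> R -> R -> R -> C) (x y t : R)
  : nat -> nat -> C := fun a al => phi a al x y t.

Definition Lfun (N : nat) (lams : nat -> R) (phi : nat -> nat -> R -> R -> R -> C)
  (lam : C) (a b : nat) : R -> R -> R -> C :=
  fun x y t => Lmat N lams (at_pt phi x y t) lam a b.

(* Main.v *)
Require Import Defs.
From Stdlib Require Import Reals Lra Lia.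
From Coquelicot Require Import Coquelicot.
Open Scope R_scope.

Definition cder (f : R -> C) (x : R) (l : C) : Prop :=
  has_pdx (fun s _ _ => f s) x 0 0 l.

Lemma cder_iff (f : R -> C) x l :
  cder f x l <-> is_derive (fun s => fst (f s)) x (fst l) /\ is_derive (fun s => snd (f s)) x (snd l).
Proof.
  unfold cder, has_pdx. split.
  - intros H. split.
    + unfold is_derive in *.
      eapply filterdiff_ext_lin.
      apply (filterdiff_comp' f (fun t : prod_NormedModule R_AbsRing R_NormedModule R_NormedModule => fst t) x _ (fun t : prod_NormedModule R_AbsRing R_NormedModule R_NormedModule => fst t) H).
      apply filterdiff_linear, is_linear_fst.
      intros; reflexivity.
    + unfold is_derive in *.
      eapply filterdiff_ext_lin.
      apply (filterdiff_comp' f (fun t : prod_NormedModule R_AbsRing R_NormedModule R_NormedModule => snd t) x _ (fun t : prod_NormedModule R_AbsRing R_NormedModule R_NormedModule => snd t) H).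
      apply filterdiff_linear, is_linear_snd.
      intros; reflexivity.
  - intros [H1 H2]. unfold is_derive in *.
    apply (filterdiff_ext (fun s => (fst (f s), snd (f s)))).
    { intros s. destruct (f s); reflexivity. }
    eapply filterdiff_ext_lin.
    apply (filterdiff_comp_2 (fun s => fst (f s)) (fun s => snd (f s))
       (fun a b => (a, b) : prod_NormedModule R_AbsRing R_NormedModule R_NormedModule) _ _
       (fun a b => (a, b) : prod_NormedModule R_AbsRing R_NormedModule R_NormedModule) H1 H2).
    apply (filterdiff_linear (fun t : prod_NormedModule R_AbsRing R_NormedModule R_NormedModule => (fst t, snd t))).
    apply is_linear_prod; [apply is_linear_fst | apply is_linear_snd].
    intros; reflexivity.
Qed.


Lemma isd_eq (f : R -> R) x l l' : is_derive f x l -> l = l' -> is_derive f x l'.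
Proof. intros H ->; exact H. Qed.

Ltac rsimp := repeat (unfold plus, mult, minus, opp, scal in *; simpl in *).

Lemma cder_plus f g x df dg : cder f x df -> cder g x dg -> cder (fun s => f s + g s)%C x (df + dg)%C.
Proof.
  rewrite !cder_iff. intros [F1 F2] [G1 G2]. split.
  - eapply isd_eq. apply (is_derive_plus _ _ _ _ _ F1 G1). rsimp. reflexivity.
  - eapply isd_eq. apply (is_derive_plus _ _ _ _ _ F2 G2). rsimp. reflexivity.
Qed.

Lemma cder_mult f g x df dg : cder f x df -> cder g x dg ->
  cder (fun s => f s * g s)%C x (df * g x + f x * dg)%C.
Proof.
  rewrite !cder_iff. intros [F1 F2] [G1 G2]. split.
  - eapply isd_eq. apply (is_derive_minus _ _ _ _ _
       (is_derive_mult _ _ _ _ _ F1 G1 Rmult_comm) (is_derive_mult _ _ _ _ _ F2 G2 Rmult_comm)).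
    rsimp. ring.
  - eapply isd_eq. apply (is_derive_plus _ _ _ _ _
       (is_derive_mult _ _ _ _ _ F1 G2 Rmult_comm) (is_derive_mult _ _ _ _ _ F2 G1 Rmult_comm)).
    rsimp. ring.
Qed.

Lemma cder_const (k : C) x : cder (fun _ => k) x 0%C.
Proof.
  rewrite cder_iff. split; simpl; apply (is_derive_const (K:=R_AbsRing) (V:=R_NormedModule)).
Qed.

Lemma cder_conj f x df : cder f x df -> cder (fun s => Cconj (f s)) x (Cconj df).
Proof.
  rewrite !cder_iff. intros [F1 F2]. split.
  - exact F1.
  - eapply isd_eq. apply (is_derive_opp _ _ _ F2). rsimp. reflexivity.
Qed.

Lemma cder_ext f g x l : (forall s, f s = g s) -> cder f x l -> cder g x l.
Proof.
  intros E. rewrite !cder_iff. intros [F1 F2]. split.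
  - eapply is_derive_ext; [|exact F1]. intros; simpl; rewrite E; reflexivity.
  - eapply is_derive_ext; [|exact F2]. intros; simpl; rewrite E; reflexivity.
Qed.

Lemma cder_ext_loc f g x l : locally x (fun s => f s = g s) -> cder f x l -> cder g x l.
Proof.
  intros E. rewrite !cder_iff. intros [F1 F2]. split.
  - eapply is_derive_ext_loc; [|exact F1]. eapply filter_imp; [|exact E]. intros; simpl; rewrite H; reflexivity.
  - eapply is_derive_ext_loc; [|exact F2]. eapply filter_imp; [|exact E]. intros; simpl; rewrite H; reflexivity.
Qed.

Lemma cder_unique f x l l' : cder f x l -> cder f x l' -> l = l'.
Proof.
  rewrite !cder_iff. intros [F1 F2] [G1 G2].
  apply is_derive_unique in F1, F2, G1, G2.
  destruct l, l'; simpl in *; congruence.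
Qed.

Lemma cder_csum (F : nat -> R -> C) dF x N :
  (forall al, (al < N)%nat -> cder (F al) x (dF al)) ->
  cder (fun s => csum N (fun al => F al s)) x (csum N dF).
Proof.
  induction N; intros H; simpl.
  - apply cder_const.
  - apply cder_plus. apply IHN. intros; apply H; lia. apply H; lia.
Qed.


Lemma conj_RtoC r : Cconj (RtoC r) = RtoC r.
Proof. unfold Cconj, RtoC; simpl. f_equal. ring. Qed.
Lemma conj_ii : Cconj ii = (- ii)%C.
Proof. unfold Cconj, Ci, Copp; simpl. f_equal. ring. Qed.

Ltac conjs := repeat (rewrite ?Cplus_conj, ?Cmult_conj, ?Copp_conj, ?Cminus_conj, ?Cconj_conj, ?conj_RtoC, ?conj_ii).

Definition vv (v : nat -> C) : mat3 := fun c d => (v c * Cconj (v d))%C.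
Definition Ex : mat3 := mk3 ii 0 0 0 ii 0 0 0 0.

Lemma perx f g lam (la : R) v a b : (lam - RtoC la <> 0)%C -> (a < 3)%nat -> (b < 3)%nat ->
  (comm (Wx lam f g) (fun c d => vv v c d / (lam - RtoC la)) a b -
   (mvec (Wx (RtoC la) f g) v a * Cconj (v b) + v a * Cconj (mvec (Wx (RtoC la) f g) v b)) / (lam - RtoC la)
   = comm Ex (vv v) a b)%C.
Proof.
  intros Hl Ha Hb.
  destruct a as [|[|[|a]]]; try lia; destruct b as [|[|[|b]]]; try lia;
  unfold comm, mmul, mvec, vv, Wx, Ex, mk3; cbn [csum]; conjs; field; auto.
Qed.

Definition Ey : mat3 := mk3 ii 0 0 0 (- ii) 0 0 0 0.
Definition Ec : mat3 := mk3 (- (2 * ii)) 0 0 0 (2 * ii) 0 0 0 0.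
Definition Etl (lam u f g : C) : mat3 :=
  mk3 (- (2 * ii * lam)) (- (2 * u)) (- (2 * ii * f))
      (2 * Cconj u) (2 * ii * lam) (2 * ii * g)
      (- (2 * ii * Cconj f)) (2 * ii * Cconj g) 0.

Lemma pery lam u f g (la : R) v a b : (lam - RtoC la <> 0)%C -> (a < 3)%nat -> (b < 3)%nat ->
  (comm (Wy lam u f g) (fun c d => vv v c d / (lam - RtoC la)) a b -
   (mvec (Wy (RtoC la) u f g) v a * Cconj (v b) + v a * Cconj (mvec (Wy (RtoC la) u f g) v b)) / (lam - RtoC la)
   = comm Ey (vv v) a b)%C.
Proof.
  intros Hl Ha Hb.
  destruct a as [|[|[|a]]]; try lia; destruct b as [|[|[|b]]]; try lia;
  unfold comm, mmul, mvec, vv, Wy, Ey, mk3; cbn [csum]; conjs; field; auto.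
Qed.

Lemma pert lam u uy f fy g gy v1 v2 (la : R) v a b : (lam - RtoC la <> 0)%C -> (a < 3)%nat -> (b < 3)%nat ->
  (comm (Wt lam u uy f fy g gy v1 v2) (fun c d => vv v c d / (lam - RtoC la)) a b -
   (mvec (Wt (RtoC la) u uy f fy g gy v1 v2) v a * Cconj (v b) + v a * Cconj (mvec (Wt (RtoC la) u uy f fy g gy v1 v2) v b)) / (lam - RtoC la)
   = comm (Etl lam u f g) (vv v) a b + RtoC la * comm Ec (vv v) a b)%C.
Proof.
  intros Hl Ha Hb.
  destruct a as [|[|[|a]]]; try lia; destruct b as [|[|[|b]]]; try lia;
  unfold comm, mmul, mvec, vv, Wt, Etl, Ec, mk3, csq; cbn [csum]; conjs; field; auto.
Qed.

Lemma dery u f g (la : R) v a b : (a < 3)%nat -> (b < 3)%nat ->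
  (mvec (Wy (RtoC la) u f g) v a * Cconj (v b) + v a * Cconj (mvec (Wy (RtoC la) u f g) v b)
   = comm (Wy 0 u f g) (vv v) a b + RtoC la * comm Ey (vv v) a b)%C.
Proof.
  intros Ha Hb.
  destruct a as [|[|[|a]]]; try lia; destruct b as [|[|[|b]]]; try lia;
  unfold comm, mmul, mvec, vv, Wy, Ey, mk3; cbn [csum]; conjs; ring.
Qed.


Lemma csum_plus N F G : csum N (fun al => F al + G al)%C = (csum N F + csum N G)%C.
Proof. induction N; simpl. ring. rewrite IHN. ring. Qed.
Lemma csum_scal k N F : csum N (fun al => k * F al)%C = (k * csum N F)%C.
Proof. induction N; simpl. ring. rewrite IHN. ring. Qed.
Lemma csum_ext N F G : (forall al, (al < N)%nat -> F al = G al) -> csum N F = csum N G.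
Proof. induction N; intros H; simpl. reflexivity. rewrite IHN, H. reflexivity. lia. intros; apply H; lia. Qed.
Lemma csum_conj N F : Cconj (csum N F) = csum N (fun al => Cconj (F al)).
Proof. induction N; simpl. apply conj_RtoC. rewrite Cplus_conj, IHN. reflexivity. Qed.

Lemma comm_ext A X Y a b : (forall c d, X c d = Y c d) -> comm A X a b = comm A Y a b.
Proof. intros H. unfold comm, mmul. cbn [csum]. rewrite !H. reflexivity. Qed.
Lemma comm_plus A X Y a b : comm A (fun c d => X c d + Y c d)%C a b = (comm A X a b + comm A Y a b)%C.
Proof. unfold comm, mmul. cbn [csum]. ring. Qed.
Lemma comm_scal A k X a b : comm A (fun c d => k * X c d)%C a b = (k * comm A X a b)%C.
Proof. unfold comm, mmul. cbn [csum]. ring. Qed.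
Lemma comm_zero A a b : comm A (fun _ _ => RtoC 0) a b = RtoC 0.
Proof. unfold comm, mmul. cbn [csum]. ring. Qed.

Lemma csum_comm A N (X : nat -> mat3) a b :
  csum N (fun al => comm A (X al) a b) = comm A (fun c d => csum N (fun al => X al c d)) a b.
Proof.
  induction N; simpl. rewrite comm_zero. reflexivity.
  rewrite IHN. rewrite <- comm_plus. reflexivity.
Qed.

Definition col (ph : nat -> nat -> C) (al : nat) : nat -> C := fun c => ph c al.
Definition Mm N (ph : nat -> nat -> C) : mat3 := fun c d => csum N (fun al => vv (col ph al) c d).
Definition M1 N (lams : nat -> R) (ph : nat -> nat -> C) : mat3 :=
  fun c d => csum N (fun al => RtoC (lams al) * vv (col ph al) c d)%C.

Definition Dsum N lams (ph : nat -> nat -> C) (W : C -> mat3) (lam : C) a b : C :=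
  csum N (fun al => (mvec (W (RtoC (lams al))) (col ph al) a * Cconj (ph b al)
          + ph a al * Cconj (mvec (W (RtoC (lams al))) (col ph al) b)) / (lam - RtoC (lams al)))%C.

Lemma decomp N lams ph (W : C -> mat3) lam (P : nat -> C) a b :
  (forall al, (al < N)%nat ->
     (comm (W lam) (fun c d => vv (col ph al) c d / (lam - RtoC (lams al))) a b -
      (mvec (W (RtoC (lams al))) (col ph al) a * Cconj (ph b al)
          + ph a al * Cconj (mvec (W (RtoC (lams al))) (col ph al) b)) / (lam - RtoC (lams al)) = P al)%C) ->
  comm (W lam) (Lmat N lams ph lam) a b = (Dsum N lams ph W lam a b + comm (W lam) Cdiag a b + csum N P)%C.
Proof.
  intros H.
  rewrite (comm_ext _ _ (fun c d => Cdiag c d + csum N (fun al => vv (col ph al) c d / (lam - RtoC (lams al))))%C)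
    by (intros; reflexivity).
  rewrite comm_plus, <- csum_comm.
  rewrite (csum_ext N _ (fun al => (mvec (W (RtoC (lams al))) (col ph al) a * Cconj (ph b al)
          + ph a al * Cconj (mvec (W (RtoC (lams al))) (col ph al) b)) / (lam - RtoC (lams al)) + P al)%C).
  2:{ intros al Hal. rewrite <- (H al Hal). ring. }
  rewrite csum_plus. unfold Dsum. ring.
Qed.


Lemma cder_eqv f x l l' : cder f x l -> l = l' -> cder f x l'.
Proof. intros H ->; exact H. Qed.

Lemma dterm (h1 h2 : R -> C) d1 d2 (k : C) x :
  cder h1 x d1 -> cder h2 x d2 ->
  cder (fun s => (h1 s * Cconj (h2 s)) / k)%C x ((d1 * Cconj (h2 x) + h1 x * Cconj d2) / k)%C.
Proof.
  intros H1 H2.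
  eapply cder_eqv.
  apply (cder_mult (fun s => h1 s * Cconj (h2 s))%C (fun _ => / k)%C).
  apply (cder_mult h1 (fun s => Cconj (h2 s))). exact H1. apply cder_conj, H2.
  apply cder_const.
  unfold Cdiv. ring.
Qed.

Lemma dterm0 (h1 h2 : R -> C) d1 d2 x :
  cder h1 x d1 -> cder h2 x d2 ->
  cder (fun s => (h1 s * Cconj (h2 s)))%C x ((d1 * Cconj (h2 x) + h1 x * Cconj d2))%C.
Proof.
  intros H1 H2.
  apply (cder_mult h1 (fun s => Cconj (h2 s))). exact H1. apply cder_conj, H2.
Qed.

Lemma dLmat N lams lam (h : nat -> nat -> R -> C) (dh : nat -> nat -> C) x a b :
  (forall al c, (al < N)%nat -> (c < 3)%nat -> cder (h c al) x (dh c al)) ->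
  (a < 3)%nat -> (b < 3)%nat ->
  cder (fun s => Lmat N lams (fun c al => h c al s) lam a b) x
    (csum N (fun al => (dh a al * Cconj (h b al x) + h a al x * Cconj (dh b al)) / (lam - RtoC (lams al))))%C.
Proof.
  intros H Ha Hb. unfold Lmat.
  eapply cder_eqv.
  apply (cder_plus (fun _ => Cdiag a b)). apply cder_const.
  apply cder_csum. intros al Hal.
  apply dterm; apply H; auto.
  ring.
Qed.

Lemma dMm N (h : nat -> nat -> R -> C) (dh : nat -> nat -> C) x a b :
  (forall al c, (al < N)%nat -> (c < 3)%nat -> cder (h c al) x (dh c al)) ->
  (a < 3)%nat -> (b < 3)%nat ->
  cder (fun s => Mm N (fun c al => h c al s) a b) x
    (csum N (fun al => (dh a al * Cconj (h b al x) + h a al x * Cconj (dh b al))))%C.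
Proof.
  intros H Ha Hb. unfold Mm.
  apply cder_csum. intros al Hal.
  apply dterm0; apply H; auto.
Qed.

Lemma Mm_conj N ph a b : Mm N ph b a = Cconj (Mm N ph a b).
Proof.
  unfold Mm. rewrite csum_conj. apply csum_ext. intros. unfold vv. conjs. ring.
Qed.

Lemma cinner_Mm N ph i j : cinner N ph i j = Mm N ph j i.
Proof. unfold cinner, Mm. apply csum_ext. intros. unfold vv, col. ring. Qed.

Lemma open_slice_y D x y t : open3 D -> D x y t -> locally y (fun s => D x s t).
Proof.
  intros HD Hp. unfold open3 in HD.
  destruct (HD ((x, y), t) Hp) as [eps He].
  exists eps. intros s Hs. apply (He ((x, s), t)).
  split; [split|]; simpl; auto; apply ball_center.
Qed.

Lemma ii_neq (r : R) : ii <> RtoC r.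
Proof. intros E. apply (f_equal snd) in E. simpl in E. lra. Qed.


Ltac cunf := unfold Cminus, Cplus, Cmult, Copp, Ci, RtoC, Cconj, Cdiv, Cinv, csq in *.
Ltac ceq := apply injective_projections; cunf; simpl; ring.
Ltac csplit H := let H1 := fresh "H" in let H2 := fresh "H" in
  pose proof (f_equal fst H) as H1; pose proof (f_equal snd H) as H2; clear H;
  cunf; simpl in H1, H2.
Ltac un3 := unfold comm, mmul, mk3; cbn [csum].

Lemma comm_Ec X a b : comm Ec X a b = (-(2) * comm Ey X a b)%C.
Proof.
  unfold Ec, Ey; un3.
  destruct a as [|[|[|a]]]; destruct b as [|[|[|b]]]; cbn; ring.
Qed.

Lemma ii2 : (ii * ii = - (1))%C.
Proof. apply injective_projections; cunf; simpl; ring. Qed.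
Lemma iip2 : (ii ^ 2 = - (1))%C.
Proof. simpl. rewrite <- ii2. ring. Qed.
Lemma iip3 : (ii ^ 3 = - ii)%C.
Proof. simpl. replace (ii * (ii * (ii * 1)))%C with ((ii * ii) * ii)%C by ring. rewrite ii2. ring. Qed.
Lemma iip4 : (ii ^ 4 = 1)%C.
Proof. simpl. replace (ii * (ii * (ii * (ii * 1))))%C with ((ii * ii) * (ii * ii))%C by ring. rewrite ii2. ring. Qed.
Ltac iring := conjs; ring_simplify; rewrite ?iip2, ?iip3, ?iip4; ring.
Lemma fx02 f g (M : mat3) : (comm (Wx ii f g) Cdiag 0%nat 2%nat + comm Ex M 0%nat 2%nat = 0)%C -> M 0%nat 2%nat = f.
Proof.
  unfold Wx, Ex, Cdiag; un3. intros H. csplit H. apply injective_projections; simpl; lra.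
Qed.
Lemma fx12 f g (M : mat3) : (comm (Wx ii f g) Cdiag 1%nat 2%nat + comm Ex M 1%nat 2%nat = 0)%C -> M 1%nat 2%nat = (- g)%C.
Proof.
  unfold Wx, Ex, Cdiag; un3. intros H. csplit H. apply injective_projections; simpl; lra.
Qed.
Lemma fy01 u f g (M : mat3) : (comm (Wy ii u f g) Cdiag 0%nat 1%nat + comm Ey M 0%nat 1%nat = 0)%C -> M 0%nat 1%nat = (- (ii * u))%C.
Proof.
  unfold Wy, Ey, Cdiag; un3. intros H. csplit H. apply injective_projections; simpl; lra.
Qed.

Section Hyps.
Variables (u f g : C) (M : mat3).
Hypothesis h01 : M 0%nat 1%nat = (- (ii * u))%C.
Hypothesis h02 : M 0%nat 2%nat = f.
Hypothesis h12 : M 1%nat 2%nat = (- g)%C.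
Hypothesis h10 : M 1%nat 0%nat = Cconj (M 0%nat 1%nat).
Hypothesis h20 : M 2%nat 0%nat = Cconj (M 0%nat 2%nat).
Hypothesis h21 : M 2%nat 1%nat = Cconj (M 1%nat 2%nat).
Lemma bx lam a b : (a < 3)%nat -> (b < 3)%nat -> (comm (Wx lam f g) Cdiag a b + comm Ex M a b = 0)%C.
Proof.
  intros Ha Hb. unfold Wx, Ex, Cdiag.
  destruct a as [|[|[|a]]]; try lia; destruct b as [|[|[|b]]]; try lia; un3;
  rewrite ?h10, ?h20, ?h21, ?h01, ?h02, ?h12; unfold csq; iring.
Qed.

Lemma by_ lam a b : (a < 3)%nat -> (b < 3)%nat -> (comm (Wy lam u f g) Cdiag a b + comm Ey M a b = 0)%C.
Proof.
  intros Ha Hb. unfold Wy, Ey, Cdiag.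
  destruct a as [|[|[|a]]]; try lia; destruct b as [|[|[|b]]]; try lia; un3;
  rewrite ?h10, ?h20, ?h21, ?h01, ?h02, ?h12; unfold csq; iring.
Qed.

Variables (uy fy gy : C) (v1 v2 : R) (M1m : mat3).
Hypothesis d01 : comm Ey M1m 0%nat 1%nat = (- (ii * uy) - comm (Wy 0%C u f g) M 0%nat 1%nat)%C.
Hypothesis d10 : comm Ey M1m 1%nat 0%nat = (Cconj (- (ii * uy)) - comm (Wy 0%C u f g) M 1%nat 0%nat)%C.
Hypothesis d02 : comm Ey M1m 0%nat 2%nat = (fy - comm (Wy 0%C u f g) M 0%nat 2%nat)%C.
Hypothesis d20 : comm Ey M1m 2%nat 0%nat = (Cconj fy - comm (Wy 0%C u f g) M 2%nat 0%nat)%C.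
Hypothesis d12 : comm Ey M1m 1%nat 2%nat = (- gy - comm (Wy 0%C u f g) M 1%nat 2%nat)%C.
Hypothesis d21 : comm Ey M1m 2%nat 1%nat = (Cconj (- gy) - comm (Wy 0%C u f g) M 2%nat 1%nat)%C.

Lemma bt lam a b : (a < 3)%nat -> (b < 3)%nat ->
  (comm (Wt lam u uy f fy g gy v1 v2) Cdiag a b + comm (Etl lam u f g) M a b + comm Ec M1m a b = 0)%C.
Proof.
  intros Ha Hb. rewrite comm_Ec.
  destruct a as [|[|[|a]]]; try lia; destruct b as [|[|[|b]]]; try lia;
  rewrite ?d01, ?d10, ?d02, ?d20, ?d12, ?d21;
  unfold Wt, Etl, Ey, Wy, Cdiag; un3;
  rewrite ?h10, ?h20, ?h21, ?h01, ?h02, ?h12; unfold csq; iring.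
Qed.
End Hyps.


Lemma LX N lams ph f g lam a b : (forall al, (al < N)%nat -> lam <> RtoC (lams al)) ->
  (a < 3)%nat -> (b < 3)%nat ->
  comm (Wx lam f g) (Lmat N lams ph lam) a b =
  (Dsum N lams ph (fun la => Wx la f g) lam a b + (comm (Wx lam f g) Cdiag a b + comm Ex (Mm N ph) a b))%C.
Proof.
  intros Hl Ha Hb.
  rewrite (decomp N lams ph (fun la => Wx la f g) lam (fun al => comm Ex (vv (col ph al)) a b)).
  - unfold Mm. rewrite csum_comm. ring.
  - intros al Hal. apply (perx f g lam (lams al) (col ph al) a b); auto. intros E. apply (Hl al Hal).
    transitivity (lam - RtoC (lams al) + RtoC (lams al))%C. ring. rewrite E. ring.
Qed.

Lemma LY N lams ph u f g lam a b : (forall al, (al < N)%nat -> lam <> RtoC (lams al)) ->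
  (a < 3)%nat -> (b < 3)%nat ->
  comm (Wy lam u f g) (Lmat N lams ph lam) a b =
  (Dsum N lams ph (fun la => Wy la u f g) lam a b + (comm (Wy lam u f g) Cdiag a b + comm Ey (Mm N ph) a b))%C.
Proof.
  intros Hl Ha Hb.
  rewrite (decomp N lams ph (fun la => Wy la u f g) lam (fun al => comm Ey (vv (col ph al)) a b)).
  - unfold Mm. rewrite csum_comm. ring.
  - intros al Hal. apply (pery lam u f g (lams al) (col ph al) a b); auto. intros E. apply (Hl al Hal).
    transitivity (lam - RtoC (lams al) + RtoC (lams al))%C. ring. rewrite E. ring.
Qed.

Lemma LT N lams ph u uy f fy g gy v1 v2 lam a b : (forall al, (al < N)%nat -> lam <> RtoC (lams al)) ->
  (a < 3)%nat -> (b < 3)%nat ->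
  comm (Wt lam u uy f fy g gy v1 v2) (Lmat N lams ph lam) a b =
  (Dsum N lams ph (fun la => Wt la u uy f fy g gy v1 v2) lam a b +
   (comm (Wt lam u uy f fy g gy v1 v2) Cdiag a b + comm (Etl lam u f g) (Mm N ph) a b
    + comm Ec (M1 N lams ph) a b))%C.
Proof.
  intros Hl Ha Hb.
  rewrite (decomp N lams ph (fun la => Wt la u uy f fy g gy v1 v2) lam
     (fun al => comm (Etl lam u f g) (vv (col ph al)) a b + RtoC (lams al) * comm Ec (vv (col ph al)) a b)%C).
  - rewrite csum_plus. unfold Mm, M1. rewrite csum_comm.
    rewrite (csum_ext N (fun al => RtoC (lams al) * comm Ec (vv (col ph al)) a b)%C
                (fun al => comm Ec (fun c d => RtoC (lams al) * vv (col ph al) c d) a b)%C).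
    2:{ intros. rewrite comm_scal. reflexivity. }
    rewrite csum_comm. ring.
  - intros al Hal. apply (pert lam u uy f fy g gy v1 v2 (lams al) (col ph al) a b); auto. intros E. apply (Hl al Hal).
    transitivity (lam - RtoC (lams al) + RtoC (lams al))%C. ring. rewrite E. ring.
Qed.

Lemma DY N lams ph u f g a b : (a < 3)%nat -> (b < 3)%nat ->
  csum N (fun al => mvec (Wy (RtoC (lams al)) u f g) (col ph al) a * Cconj (ph b al)
          + ph a al * Cconj (mvec (Wy (RtoC (lams al)) u f g) (col ph al) b))%C
  = (comm (Wy 0 u f g) (Mm N ph) a b + comm Ey (M1 N lams ph) a b)%C.
Proof.
  intros Ha Hb.
  rewrite (csum_ext N _ (fun al => comm (Wy 0 u f g) (vv (col ph al)) a b
        + comm Ey (fun c d => RtoC (lams al) * vv (col ph al) c d) a b)%C).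
  2:{ intros. rewrite comm_scal. apply (dery u f g (lams al) (col ph al) a b); auto. }
  rewrite csum_plus. unfold Mm, M1. rewrite !csum_comm. reflexivity.
Qed.

Lemma cancel0 (D K : C) : D = (D + K)%C -> K = 0%C.
Proof. intros H. assert (E : K = ((D + K) - D)%C) by ring. rewrite E, <- H. ring. Qed.

Lemma cder_scal k h y d : cder h y d -> cder (fun s => k * h s)%C y (k * d)%C.
Proof.
  intros H. eapply cder_eqv. apply (cder_mult (fun _ => k) h). apply cder_const. exact H. ring.
Qed.


Theorem lemma1
  (N : nat) (HN : (1 <= N)%nat)
  (lams : nat -> R)
  (Hdist : forall al be, (al < N)%nat -> (be < N)%nat -> al <> be -> lams al <> lams be)
  (Hnz : forall al, (al < N)%nat -> lams al <> 0)
  (D : R -> R -> R -> Prop) (HD : open3 D)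
  (u f g uy fy gy : R -> R -> R -> C) (v1 v2 : R -> R -> R -> R)
  (Huy : forall x y t, D x y t -> has_pdy u x y t (uy x y t))
  (Hfy : forall x y t, D x y t -> has_pdy f x y t (fy x y t))
  (Hgy : forall x y t, D x y t -> has_pdy g x y t (gy x y t))
  (phi : nat -> nat -> R -> R -> R -> C)
  (HFx : forall al a x y t, (al < N)%nat -> (a < 3)%nat -> D x y t ->
     has_pdx (phi a al) x y t
       (mvec (Wx (RtoC (lams al)) (f x y t) (g x y t))
             (fun c => phi c al x y t) a))
  (HFy : forall al a x y t, (al < N)%nat -> (a < 3)%nat -> D x y t ->
     has_pdy (phi a al) x y t
       (mvec (Wy (RtoC (lams al)) (u x y t) (f x y t) (g x y t))
             (fun c => phi c al x y t) a))
  (HFt : forall al a x y t, (al < N)%nat -> (a < 3)%nat -> D x y t ->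
     has_pdt (phi a al) x y t
       (mvec (Wt (RtoC (lams al)) (u x y t) (uy x y t) (f x y t) (fy x y t)
                 (g x y t) (gy x y t) (v1 x y t) (v2 x y t))
             (fun c => phi c al x y t) a)) :
  (forall x y t, D x y t ->
   forall lam : C, (forall al, (al < N)%nat -> lam <> RtoC (lams al)) ->
   forall a b, (a < 3)%nat -> (b < 3)%nat ->
     has_pdx (Lfun N lams phi lam a b) x y t
       (comm (Wx lam (f x y t) (g x y t))
             (Lmat N lams (at_pt phi x y t) lam) a b)
  /\ has_pdy (Lfun N lams phi lam a b) x y t
       (comm (Wy lam (u x y t) (f x y t) (g x y t))
             (Lmat N lams (at_pt phi x y t) lam) a b)
  /\ has_pdt (Lfun N lams phi lam a b) x y t
       (comm (Wt lam (u x y t) (uy x y t) (f x y t) (fy x y t)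
                 (g x y t) (gy x y t) (v1 x y t) (v2 x y t))
             (Lmat N lams (at_pt phi x y t) lam) a b))
  <->
  (forall x y t, D x y t ->
     cinner N (at_pt phi x y t) 1 0 = Copp (Cmult Ci (u x y t))
  /\ cinner N (at_pt phi x y t) 2 0 = f x y t
  /\ cinner N (at_pt phi x y t) 2 1 = Copp (g x y t)).
Proof.
  assert (DX : forall x y t lam a b, D x y t -> (a < 3)%nat -> (b < 3)%nat ->
     cder (fun s => Lmat N lams (at_pt phi s y t) lam a b) x
       (Dsum N lams (at_pt phi x y t) (fun la => Wx la (f x y t) (g x y t)) lam a b)).
  { intros x y t lam a b Hp Ha Hb.
    apply (dLmat N lams lam (fun c al s => phi c al s y t)
      (fun c al => mvec (Wx (RtoC (lams al)) (f x y t) (g x y t)) (col (at_pt phi x y t) al) c) x a b); auto.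
    intros al c Hal Hc. apply (HFx al c x y t Hal Hc Hp). }
  assert (DYL : forall x y t lam a b, D x y t -> (a < 3)%nat -> (b < 3)%nat ->
     cder (fun s => Lmat N lams (at_pt phi x s t) lam a b) y
       (Dsum N lams (at_pt phi x y t) (fun la => Wy la (u x y t) (f x y t) (g x y t)) lam a b)).
  { intros x y t lam a b Hp Ha Hb.
    apply (dLmat N lams lam (fun c al s => phi c al x s t)
      (fun c al => mvec (Wy (RtoC (lams al)) (u x y t) (f x y t) (g x y t)) (col (at_pt phi x y t) al) c) y a b); auto.
    intros al c Hal Hc. apply (HFy al c x y t Hal Hc Hp). }
  assert (DT : forall x y t lam a b, D x y t -> (a < 3)%nat -> (b < 3)%nat ->
     cder (fun s => Lmat N lams (at_pt phi x y s) lam a b) t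
       (Dsum N lams (at_pt phi x y t) (fun la => Wt la (u x y t) (uy x y t) (f x y t) (fy x y t)
                 (g x y t) (gy x y t) (v1 x y t) (v2 x y t)) lam a b)).
  { intros x y t lam a b Hp Ha Hb.
    apply (dLmat N lams lam (fun c al s => phi c al x y s)
      (fun c al => mvec (Wt (RtoC (lams al)) (u x y t) (uy x y t) (f x y t) (fy x y t)
                 (g x y t) (gy x y t) (v1 x y t) (v2 x y t)) (col (at_pt phi x y t) al) c) t a b); auto.
    intros al c Hal Hc. apply (HFt al c x y t Hal Hc Hp). }
  split.
  - intros HL x y t Hp.
    assert (Hnl : forall al, (al < N)%nat -> ii <> RtoC (lams al)) by (intros; apply ii_neq).
    destruct (HL x y t Hp ii Hnl 0%nat 2%nat ltac:(lia) ltac:(lia)) as [H02 _].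
    destruct (HL x y t Hp ii Hnl 1%nat 2%nat ltac:(lia) ltac:(lia)) as [H12 _].
    destruct (HL x y t Hp ii Hnl 0%nat 1%nat ltac:(lia) ltac:(lia)) as [_ [H01 _]].
    pose proof (cder_unique _ _ _ _ (DX x y t ii 0%nat 2%nat Hp ltac:(lia) ltac:(lia)) H02) as E02.
    pose proof (cder_unique _ _ _ _ (DX x y t ii 1%nat 2%nat Hp ltac:(lia) ltac:(lia)) H12) as E12.
    pose proof (cder_unique _ _ _ _ (DYL x y t ii 0%nat 1%nat Hp ltac:(lia) ltac:(lia)) H01) as E01.
    rewrite LX in E02, E12 by (auto; lia). rewrite LY in E01 by (auto; lia).
    apply cancel0 in E02, E12, E01.
    rewrite !cinner_Mm.
    split; [|split].
    + exact (fy01 _ _ _ _ E01).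
    + exact (fx02 _ _ _ E02).
    + exact (fx12 _ _ _ E12).
  - intros HC x y t Hp lam Hlam a b Ha Hb.
    set (ph := at_pt phi x y t).
    destruct (HC x y t Hp) as [c10 [c20 c21]].
    rewrite !cinner_Mm in c10, c20, c21.
    assert (h10 := Mm_conj N ph 0%nat 1%nat).
    assert (h20 := Mm_conj N ph 0%nat 2%nat).
    assert (h21 := Mm_conj N ph 1%nat 2%nat).
    split; [|split].
    + change (cder (fun s => Lmat N lams (at_pt phi s y t) lam a b) x
        (comm (Wx lam (f x y t) (g x y t)) (Lmat N lams ph lam) a b)).
      eapply cder_eqv. apply (DX x y t lam a b Hp Ha Hb).
      rewrite LX by auto. rewrite (bx (u x y t)); try (unfold ph; ring); try assumption.
    + change (cder (fun s => Lmat N lams (at_pt phi x s t) lam a b) y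
        (comm (Wy lam (u x y t) (f x y t) (g x y t)) (Lmat N lams ph lam) a b)).
      eapply cder_eqv. apply (DYL x y t lam a b Hp Ha Hb).
      rewrite LY by auto.
      rewrite by_; try (unfold ph; ring); try assumption.
    +
      assert (DYM : forall a b, (a < 3)%nat -> (b < 3)%nat ->
        cder (fun s => Mm N (at_pt phi x s t) a b) y
          (comm (Wy 0 (u x y t) (f x y t) (g x y t)) (Mm N ph) a b + comm Ey (M1 N lams ph) a b)%C).
      { intros a' b' Ha' Hb'.
        eapply cder_eqv.
        apply (dMm N (fun c al s => phi c al x s t)
          (fun c al => mvec (Wy (RtoC (lams al)) (u x y t) (f x y t) (g x y t)) (col ph al) c) y a' b'); auto.
        intros al c Hal Hc. apply (HFy al c x y t Hal Hc Hp).
        apply (DY N lams ph (u x y t) (f x y t) (g x y t) a' b' Ha' Hb'). }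
      assert (Hloc := open_slice_y D x y t HD Hp).
      assert (dd : forall a b K (G : R -> C), (a < 3)%nat -> (b < 3)%nat ->
          (forall s, D x s t -> Mm N (at_pt phi x s t) a b = G s) -> cder G y K ->
          comm Ey (M1 N lams ph) a b = (K - comm (Wy 0 (u x y t) (f x y t) (g x y t)) (Mm N ph) a b)%C).
      { intros a' b' K G Ha' Hb' HG HK.
        assert (E := cder_unique _ _ _ _ (DYM a' b' Ha' Hb')
           (cder_ext_loc G _ y K (filter_imp _ _ (fun s Hs => eq_sym (HG s Hs)) Hloc) HK)).
        rewrite <- E. ring. }
      assert (Cu : cder (fun s => u x s t) y (uy x y t)) by exact (Huy x y t Hp).
      assert (Cf : cder (fun s => f x s t) y (fy x y t)) by exact (Hfy x y t Hp).
      assert (Cg : cder (fun s => g x s t) y (gy x y t)) by exact (Hgy x y t Hp).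
      assert (Cu' : cder (fun s => - (ii * u x s t))%C y (- (ii * uy x y t))%C).
      { eapply cder_eqv. eapply cder_ext; [|apply (cder_scal (- ii)%C _ _ _ Cu)]. intros; simpl; ring. ring. }
      assert (Cg' : cder (fun s => - g x s t)%C y (- gy x y t)%C).
      { eapply cder_eqv. eapply cder_ext; [|apply (cder_scal (- (1))%C _ _ _ Cg)]. intros; simpl; ring. ring. }
      assert (d01 := dd 0%nat 1%nat _ _ ltac:(lia) ltac:(lia)
        (fun s Hs => eq_trans (eq_sym (cinner_Mm N _ 1 0)) (proj1 (HC x s t Hs))) Cu').
      assert (d02 := dd 0%nat 2%nat _ _ ltac:(lia) ltac:(lia)
        (fun s Hs => eq_trans (eq_sym (cinner_Mm N _ 2 0)) (proj1 (proj2 (HC x s t Hs)))) Cf).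
      assert (d12 := dd 1%nat 2%nat _ _ ltac:(lia) ltac:(lia)
        (fun s Hs => eq_trans (eq_sym (cinner_Mm N _ 2 1)) (proj2 (proj2 (HC x s t Hs)))) Cg').
      assert (d10 := dd 1%nat 0%nat _ (fun s => Cconj (- (ii * u x s t)))%C ltac:(lia) ltac:(lia)
        (fun s Hs => eq_trans (Mm_conj N _ 0 1) (f_equal Cconj (eq_trans (eq_sym (cinner_Mm N _ 1 0)) (proj1 (HC x s t Hs)))))
        (cder_conj _ _ _ Cu')).
      assert (d20 := dd 2%nat 0%nat _ (fun s => Cconj (f x s t)) ltac:(lia) ltac:(lia)
        (fun s Hs => eq_trans (Mm_conj N _ 0 2) (f_equal Cconj (eq_trans (eq_sym (cinner_Mm N _ 2 0)) (proj1 (proj2 (HC x s t Hs))))))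
        (cder_conj _ _ _ Cf)).
      assert (d21 := dd 2%nat 1%nat _ (fun s => Cconj (- g x s t))%C ltac:(lia) ltac:(lia)
        (fun s Hs => eq_trans (Mm_conj N _ 1 2) (f_equal Cconj (eq_trans (eq_sym (cinner_Mm N _ 2 1)) (proj2 (proj2 (HC x s t Hs))))))
        (cder_conj _ _ _ Cg')).
      change (cder (fun s => Lmat N lams (at_pt phi x y s) lam a b) t
        (comm (Wt lam (u x y t) (uy x y t) (f x y t) (fy x y t) (g x y t) (gy x y t) (v1 x y t) (v2 x y t))
           (Lmat N lams ph lam) a b)).
      eapply cder_eqv. apply (DT x y t lam a b Hp Ha Hb).
      rewrite LT by auto.
      rewrite bt; try (unfold ph; ring); try assumption.
Qed.
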